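(* Suppose $\beta_n \phi^+_n \phi^-_n \to 0$. Then for any non-trivial solution $\psi_n = a^+_n \phi^+_n + a^-_n \phi^-_n$ of $(-\Delta+V)\psi=0$ with $a^\pm_n$ satisfying the recurrence $\begin{pmatrix} a^+_{n+1}\\ a^-_{n+1}\end{pmatrix} = (I+M_n)\begin{pmatrix} a^+_{n}\\ a^-_{n}\end{pmatrix}$, one of the following must be true: (1) Given any integer $N$, there is an integer $p>N$ such that both $a^+_p$ and $a^-_p$ are non-zero. (2) There is an integer $p_0$ such that $a^+_{p_0+k} = a^+_{p_0} \neq 0$ and $a^-_{p_0+k} = 0$ for all $k \geq 0$. (3) There is an integer $p_0$ such that $a^-_{p_0+k} = a^-_{p_0} \neq 0$ and $a^+_{p_0+k} = 0$ for all $k \geq 0$.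
   Context: On the positive integers, $(\Delta f)_n = f_{n+1}+f_{n-1}-2f_n$; $V, V^0$ are real potentials, $\phi^\pm$ are independent solutions of $(-\Delta+V^0)\phi=0$ with Wronskian $W=\phi^-_n\phi^+_{n+1}-\phi^-_{n+1}\phi^+_n$, and $\beta_n=(V_n-V^0_n)/W$. Solutions $\psi$ of $(-\Delta+V)\psi=0$ are represented as $\psi_n=a^+_n\phi^+_n+a^-_n\phi^-_n$ where the coefficients satisfy $(\nabla^-a^+_n)\phi^+_{n-1}+(\nabla^-a^-_n)\phi^-_{n-1}=0$ (with $\nabla^-f_n=f_n-f_{n-1}$, $\phi^\pm_0=0$) and the recurrence with $M_n := \beta_n\begin{pmatrix}\phi^+_n\phi^-_n & (\phi^-_n)^2\\ -(\phi^+_n)^2 & -\phi^+_n\phi^-_n\end{pmatrix}$. *)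

(* Defs.v *)
(* concrete reals R. Sequences on the positive integers are
   modelled as nat -> R; only indices n >= 1 are meaningful. *)
From Stdlib Require Import Reals Lra Lia.
Open Scope R_scope.

Definition Delta (f : nat -> R) (n : nat) : R :=
  f (S n) + f (pred n) - 2 * f n.

(* f solves (-Delta + V) f = 0 at every interior point n >= 2
   (so that f_{n-1} is a point of the positive integers). *)
Definition is_solution (V f : nat -> R) : Prop :=
  forall n : nat, (2 <= n)%nat -> - Delta f n + V n * f n = 0.

Definition lin_indep (f g : nat -> R) : Prop :=
  forall c1 c2 : R, (forall n : nat, (1 <= n)%nat -> c1 * f n + c2 * g n = 0) ->
    c1 = 0 /\ c2 = 0.

(* Wronskian W = phi^-_n phi^+_{n+1} - phi^-_{n+1} phi^+_n (constant in n for
   solutions; evaluated at n = 1). *)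
Definition wronskian (phip phim : nat -> R) : R :=
  phim 1%nat * phip 2%nat - phim 2%nat * phip 1%nat.

Definition beta (V V0 phip phim : nat -> R) (n : nat) : R :=
  (V n - V0 n) / wronskian phip phim.

Definition M11 V V0 phip phim n := beta V V0 phip phim n * (phip n * phim n).
Definition M12 V V0 phip phim n := beta V V0 phip phim n * (phim n ^ 2).
Definition M21 V V0 phip phim n := - (beta V V0 phip phim n * (phip n ^ 2)).
Definition M22 V V0 phip phim n := - (beta V V0 phip phim n * (phip n * phim n)).

(* Main.v *)
Require Import Defs.
From Stdlib Require Import Reals Lra Lia Classical.
Open Scope R_scope.

Theorem proposition1
  (V V0 phip phim psi ap am : nat -> R)
  (Hphip : is_solution V0 phip)
  (Hphim : is_solution V0 phim)
  (Hindep : lin_indep phip phim)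
  (Hlim : Un_cv (fun n => beta V V0 phip phim n * phip n * phim n) 0)
  (Hpsi : is_solution V psi)
  (Hnontriv : exists n : nat, (1 <= n)%nat /\ psi n <> 0)
  (Hrepr : forall n : nat, (1 <= n)%nat -> psi n = ap n * phip n + am n * phim n)
  (Hgauge : forall n : nat, (2 <= n)%nat ->
     (ap n - ap (pred n)) * phip (pred n) + (am n - am (pred n)) * phim (pred n) = 0)
  (Hrec : forall n : nat, (1 <= n)%nat ->
     ap (S n) = (1 + M11 V V0 phip phim n) * ap n + M12 V V0 phip phim n * am n /\
     am (S n) = M21 V V0 phip phim n * ap n + (1 + M22 V V0 phip phim n) * am n) :
  (forall N : nat, exists p : nat, (N < p)%nat /\ ap p <> 0 /\ am p <> 0)
  \/ (exists p0 : nat, (1 <= p0)%nat /\ ap p0 <> 0 /\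
        forall k : nat, ap (p0 + k)%nat = ap p0 /\ am (p0 + k)%nat = 0)
  \/ (exists p0 : nat, (1 <= p0)%nat /\ am p0 <> 0 /\
        forall k : nat, am (p0 + k)%nat = am p0 /\ ap (p0 + k)%nat = 0).
Proof.
  pose (bb := fun n : nat => beta V V0 phip phim n * phip n * phim n).
  assert (Hzero : forall p, (1 <= p)%nat -> ap p = 0 -> am p = 0 -> False).
  { intros p Hp H1 H2.
    assert (Hf : forall k, ap (p + k)%nat = 0 /\ am (p + k)%nat = 0).
    { induction k as [|k IH].
      - rewrite Nat.add_0_r; auto.
      - destruct IH as [I1 I2]. destruct (Hrec (p + k)%nat ltac:(lia)) as [R1 R2].
        replace (p + S k)%nat with (S (p + k)) by lia.
        rewrite R1, R2, I1, I2. split; ring. }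
    assert (Hps : forall m, (p <= m)%nat -> psi m = 0).
    { intros m Hm. rewrite Hrepr by lia.
      destruct (Hf (m - p)%nat) as [A B]. replace (p + (m - p))%nat with m in * by lia.
      rewrite A, B; ring. }
    assert (Hb : forall k m, (1 <= m)%nat -> (p <= m + k)%nat -> psi m = 0).
    { induction k as [|k IH]; intros m Hm Hmk.
      - apply Hps; lia.
      - destruct (Compare_dec.le_lt_dec p (m + k)) as [Hl|Hl].
        + apply IH; lia.
        + assert (E1 : psi (S m) = 0) by (apply IH; lia).
          assert (E2 : psi (S (S m)) = 0) by (apply IH; lia).
          pose proof (Hpsi (S m) ltac:(lia)) as Hs. unfold Defs.Delta in Hs.
          simpl pred in Hs. rewrite E1, E2 in Hs. lra. }
    destruct Hnontriv as [n [Hn1 Hn2]]. apply Hn2. apply (Hb p n); lia. }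
  destruct (Hlim (1/2) ltac:(lra)) as [N' HN'].
  destruct (Classical_Prop.classic
    (forall N : nat, exists p : nat, (N < p)%nat /\ ap p <> 0 /\ am p <> 0)) as [H1|H1].
  { left; exact H1. }
  right.
  apply Classical_Pred_Type.not_all_ex_not in H1. destruct H1 as [N HN].
  assert (Hor : forall p, (N < p)%nat -> ap p = 0 \/ am p = 0).
  { intros p Hp. destruct (Req_dec (ap p) 0) as [E|E]; [left; exact E|].
    destruct (Req_dec (am p) 0) as [E'|E']; [right; exact E'|].
    exfalso; apply HN; exists p; auto. }
  pose (K := S (Nat.max N N')).
  assert (Hsmall : forall n, (n >= N')%nat -> Rabs (bb n) < 1/2).
  { intros n Hn. pose proof (HN' n Hn) as H. unfold R_dist in H.
    rewrite Rminus_0_r in H. exact H. }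
  assert (Hplus : forall p, (K <= p)%nat -> ap p <> 0 -> am p = 0 ->
            ap (S p) = ap p /\ am (S p) = 0).
  { intros p Hp Ha Hm. destruct (Hrec p ltac:(lia)) as [R1 R2].
    unfold M11, M12, M21, M22 in *. rewrite Hm in R1, R2.
    destruct (Req_dec (am (S p)) 0) as [E|E].
    - rewrite E in R2.
      assert (Z : beta V V0 phip phim p * phip p ^ 2 = 0).
      { apply (Rmult_eq_reg_r (ap p)); [|exact Ha]. lra. }
      apply Rmult_integral in Z. destruct Z as [Z|Z].
      + rewrite Z in R1. split; [lra|exact E].
      + assert (phip p = 0) by (simpl in Z; rewrite Rmult_1_r in Z;
                                 apply Rmult_integral in Z; destruct Z; auto).
        rewrite H in R1. split; [lra|exact E].
    - exfalso. destruct (Hor (S p) ltac:(lia)) as [A|A]; [|contradiction].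
      rewrite A in R1.
      assert (Z : 1 + beta V V0 phip phim p * (phip p * phim p) = 0).
      { apply (Rmult_eq_reg_r (ap p)); [|exact Ha]. lra. }
      pose proof (Hsmall p ltac:(lia)) as S. unfold bb in S; cbv beta in S.
      replace (beta V V0 phip phim p * phip p * phim p) with (-1) in S
        by (rewrite Rmult_assoc; lra).
      rewrite Rabs_left in S by lra. lra. }
  assert (Hminus : forall p, (K <= p)%nat -> am p <> 0 -> ap p = 0 ->
            am (S p) = am p /\ ap (S p) = 0).
  { intros p Hp Ha Hm. destruct (Hrec p ltac:(lia)) as [R1 R2].
    unfold M11, M12, M21, M22 in *. rewrite Hm in R1, R2.
    destruct (Req_dec (ap (S p)) 0) as [E|E].
    - rewrite E in R1.
      assert (Z : beta V V0 phip phim p * phim p ^ 2 = 0).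
      { apply (Rmult_eq_reg_r (am p)); [|exact Ha]. lra. }
      apply Rmult_integral in Z. destruct Z as [Z|Z].
      + rewrite Z in R2. split; [lra|exact E].
      + assert (phim p = 0) by (simpl in Z; rewrite Rmult_1_r in Z;
                                 apply Rmult_integral in Z; destruct Z; auto).
        rewrite H in R2. split; [lra|exact E].
    - exfalso. destruct (Hor (S p) ltac:(lia)) as [A|A]; [contradiction|].
      rewrite A in R2.
      assert (Z : 1 + - (beta V V0 phip phim p * (phip p * phim p)) = 0).
      { apply (Rmult_eq_reg_r (am p)); [|exact Ha]. lra. }
      pose proof (Hsmall p ltac:(lia)) as S. unfold bb in S; cbv beta in S.
      replace (beta V V0 phip phim p * phip p * phim p) with 1 in S
        by (rewrite Rmult_assoc; lra).
      rewrite Rabs_R1 in S. lra. }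
  destruct (Hor K ltac:(unfold K; lia)) as [A|A].
  - right. assert (Hm : am K <> 0) by (intro E; exact (Hzero K ltac:(unfold K; lia) A E)).
    exists K. split; [unfold K; lia|]. split; [exact Hm|].
    induction k as [|k IH].
    + rewrite Nat.add_0_r; auto.
    + destruct IH as [I1 I2]. replace (K + S k)%nat with (S (K + k)) by lia.
      destruct (Hminus (K + k)%nat ltac:(lia) ltac:(rewrite I1; exact Hm) I2) as [E1 E2].
      rewrite E1, E2, I1. auto.
  - left. assert (Hm : ap K <> 0) by (intro E; exact (Hzero K ltac:(unfold K; lia) E A)).
    exists K. split; [unfold K; lia|]. split; [exact Hm|].
    induction k as [|k IH].
    + rewrite Nat.add_0_r; auto.
    + destruct IH as [I1 I2]. replace (K + S k)%nat with (S (K + k)) by lia.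
      destruct (Hplus (K + k)%nat ltac:(lia) ltac:(rewrite I1; exact Hm) I2) as [E1 E2].
      rewrite E1, E2, I1. auto.
Qed.
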